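(* Let $M=(S,\mathrm{Act},P)$ be an MDP and $T\subseteq S$. Let $(x,r)\in[0,1]^S\times\mathbb{N}_\infty^S$ satisfy: (1) $D^{\min}_x(r)\le r$; (2) $x\le B^{\max}(x)$; (3) for all $s\in S\setminus T$, $x(s)>0$ implies $r(s)<\infty$ (inequalities pointwise). Then $\Pr^{\max}_s(\Diamond T)\ge x(s)$ for all $s\in S$.
   Context: An MDP is a tuple $M=(S,\mathrm{Act},P)$ with $S$ finite, $\mathrm{Act}$ finite, $P\colon S\times\mathrm{Act}\times S\to[0,1]$ with $\sum_{s'}P(s,a,s')\in\{0,1\}$; $\mathrm{Act}(s)=\{a\mid\sum_{s'}P(s,a,s')=1\}$ is nonempty for all $s$; $\mathrm{Post}(s,a)=\{s'\mid P(s,a,s')>0\}$. A strategy is $\sigma\colon S\to\mathrm{Act}$ with $\sigma(s)\in\mathrm{Act}(s)$, inducing a Markov chain with transitions $P(s,\sigma(s),\cdot)$; $\Pr^\sigma_s(\Diamond T)$ is the probability of visiting $T$ from $s$ and $\Pr^{\max}_s(\Diamond T)=\max_\sigma\Pr^\sigma_s(\Diamond T)$. $B^{\max}(x)(s)=1$ for $s\in T$ and $\max_{a\in\mathrm{Act}(s)}\sum_{s'\in\mathrm{Post}(s,a)}P(s,a,s')x(s')$ for $s\notin T$. The $x$-increasing actions of $s$ are $\mathrm{Act}_x(s)=\{a\in\mathrm{Act}(s)\mid x(s)\le\sum_{s'\in\mathrm{Post}(s,a)}P(s,a,s')x(s')\}$. $\mathbb{N}_\infty=\mathbb{N}\cup\{\infty\}$,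 $1+\infty=\infty$, minimum over the empty set is $\infty$. The operator $D^{\min}_x\colon\mathbb{N}_\infty^S\to\mathbb{N}_\infty^S$ is $D^{\min}_x(r)(s)=0$ for $s\in T$ and $1+\min_{a\in\mathrm{Act}_x(s)}\min_{s'\in\mathrm{Post}(s,a)}r(s')$ for $s\notin T$. *)

(* Defs.v *)
From HB Require Import structures.
From mathcomp Require Import all_boot all_order all_algebra.
From mathcomp Require Import boolp classical_sets reals.
Set Implicit Arguments. Unset Strict Implicit. Unset Printing Implicit Defensive.
Import Order.TTheory GRing.Theory Num.Theory.
Local Open Scope ring_scope.
Local Open Scope classical_set_scope.

Section MDP.
Variables (R : realType) (S Act : finType) (P : S -> Act -> S -> R) (T : {set S}).

Definition enabled (s : S) (a : Act) : bool := \sum_(s' : S) P s a s' == 1.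

Definition post (s : S) (a : Act) (s' : S) : bool := 0 < P s a s'.

Definition is_MDP : Prop :=
  [/\ (forall s a s', 0 <= P s a s' <= 1),
      (forall s a, \sum_(s' : S) P s a s' = 0 \/ \sum_(s' : S) P s a s' = 1)
    & (forall s, exists a, enabled s a)].

Definition is_strategy (sigma : S -> Act) : Prop := forall s, enabled s (sigma s).

Fixpoint reach_within (sigma : S -> Act) (n : nat) (s : S) : R :=
  if s \in T then 1 else
  match n with
  | 0 => 0
  | n'.+1 => \sum_(s' : S) P s (sigma s) s' * reach_within sigma n' s'
  end.

(* Pr^sigma_s(<> T): the probability of the (increasing) union of the events
   "T visited within n steps", i.e. the supremum of the step-bounded probabilities *)
Definition Pr_reach (sigma : S -> Act) (s : S) : R :=
  sup (range (fun n => reach_within sigma n s)).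

Definition Pr_max_reach (s : S) : R :=
  sup [set Pr_reach sigma s | sigma in [set sigma | is_strategy sigma]].

(* Bellman operator B^max (the max over the nonempty set Act(s) of values that are
   nonnegative whenever x >= 0, so starting the fold at 0 is harmless there) *)
Definition Bmax (x : S -> R) (s : S) : R :=
  if s \in T then 1 else
  \big[Num.max/0]_(a | enabled s a) \sum_(s' : S) P s a s' * x s'.

Definition incr_action (x : S -> R) (s : S) (a : Act) : bool :=
  enabled s a && (x s <= \sum_(s' : S) P s a s' * x s').

(* N_infinity = nat U {oo}, encoded as option nat with None = oo *)
Definition ninf := option nat.
Definition ninf_le (m n : ninf) : bool :=
  match m, n with
  | _, None => true
  | None, Some _ => false
  | Some a, Some b => (a <= b)%N
  end.
Definition ninf_min (m n : ninf) : ninf := if ninf_le m n then m else n.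
Definition ninf_succ (m : ninf) : ninf :=
  match m with Some k => Some k.+1 | None => None end.

(* D^min_x(r)(s): min over the empty set is oo (= None, the identity of the fold) *)
Definition Dmin (x : S -> R) (r : S -> ninf) (s : S) : ninf :=
  if s \in T then Some 0%N else
  ninf_succ (\big[ninf_min/None]_(a | incr_action x s a)
               \big[ninf_min/None]_(s' | post s a s') r s').

End MDP.

(* Main.v *)
Require Import Defs.
From mathcomp Require Import all_boot all_order all_algebra.
From mathcomp Require Import boolp classical_sets reals.
From mathcomp Require Import lra.
Import Order.TTheory GRing.Theory Num.Theory.
Local Open Scope ring_scope.

Section Aux.
Local Set Implicit Arguments.
Variables (R : realType) (S Act : finType) (P : S -> Act -> S -> R) (T : {set S}).
Hypothesis HP : is_MDP P.

Lemma P_ge0 s a s' : 0 <= P s a s'.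
Proof. by case: HP => H _ _; case/andP: (H s a s'). Qed.

Lemma en_sum {s a} : enabled P s a -> \sum_s' P s a s' = 1.
Proof. by move/eqP. Qed.

Variable sigma : S -> Act.
Hypothesis Hsig : is_strategy P sigma.

Lemma reach_01 n s : 0 <= reach_within P T sigma n s <= 1.
Proof.
elim: n s => [|n IH] s /=; case: ifP => // _; rewrite ?lexx ?ler01 //.
apply/andP; split.
  by apply: sumr_ge0 => i _; apply: mulr_ge0; [exact: P_ge0|case/andP: (IH i)].
rewrite -(en_sum (Hsig s)); apply: ler_sum => i _.
rewrite -[X in _ <= X]mulr1; apply: ler_wpM2l; first exact: P_ge0.
by case/andP: (IH i).
Qed.

Lemma reach_mono1 n s : reach_within P T sigma n s <= reach_within P T sigma n.+1 s.
Proof.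
elim: n s => [|n IH] s.
  rewrite /=; case: ifP => // _; rewrite ?lexx //.
  by apply: sumr_ge0 => i _; apply: mulr_ge0; [exact: P_ge0|case/andP: (reach_01 0 i)].
rewrite [X in X <= _]/= [X in _ <= X]/=; case: ifP => // _.
apply: ler_sum => i _; apply: ler_wpM2l; [exact: P_ge0|exact: IH].
Qed.

Lemma reach_mono m n s : (m <= n)%N ->
  reach_within P T sigma m s <= reach_within P T sigma n s.
Proof.
move=> /subnKC <-; elim: (n - m)%N => [|k IH]; first by rewrite addn0.
by apply: le_trans IH _; rewrite addnS; apply: reach_mono1.
Qed.

Lemma hub s : has_ubound (range (fun n => reach_within P T sigma n s)).
Proof. by exists 1 => y [n _ <-]; case/andP: (reach_01 n s). Qed.

Lemma hsup s : has_sup (range (fun n => reach_within P T sigma n s)).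
Proof. by split; [exists (reach_within P T sigma 0 s); exists 0%N|exact: hub]. Qed.

Lemma reach_le_Pr n s : reach_within P T sigma n s <= Pr_reach P T sigma s.
Proof. by apply: (ub_le_sup (hub s)); exists n. Qed.

Lemma Pr_le1 s : Pr_reach P T sigma s <= 1.
Proof.
apply: ge_sup; first by exists (reach_within P T sigma 0 s); exists 0%N.
by move=> y [n _ <-]; case/andP: (reach_01 n s).
Qed.

Lemma Pr_ge0 s : 0 <= Pr_reach P T sigma s.
Proof. by apply: le_trans (reach_le_Pr 0 s); case/andP: (reach_01 0 s). Qed.

Lemma unif_N (eps : R) : 0 < eps -> forall l : seq S, exists N,
  forall s', s' \in l -> Pr_reach P T sigma s' - eps <= reach_within P T sigma N s'.
Proof.
move=> he; elim=> [|a l [N HN]]; first by exists 0%N.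
have [e [n _ <-] He] := sup_adherent he (hsup a).
exists (maxn n N) => s'; rewrite inE => /orP [/eqP -> | Hs'].
  apply: le_trans (ltW He) _; apply: reach_mono; exact: leq_maxl.
by apply: le_trans (HN _ Hs') _; apply: reach_mono; exact: leq_maxr.
Qed.

Lemma Pr_super s : s \notin T ->
  \sum_s' P s (sigma s) s' * Pr_reach P T sigma s' <= Pr_reach P T sigma s.
Proof.
move=> sT.
suff H : forall eps, 0 < eps ->
   \sum_s' P s (sigma s) s' * Pr_reach P T sigma s' <= Pr_reach P T sigma s + eps.
  rewrite leNgt; apply/negP => Hlt.
  set a := \sum_s' _ in H Hlt; set b := Pr_reach _ _ _ _ in H Hlt.
  have := H ((a - b) / 2); rewrite divr_gt0 ?subr_gt0 //.
  by move/(_ isT); lra.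
move=> eps he; have [N HN] := unif_N _ he (enum S).
apply: le_trans (lerD (reach_le_Pr N.+1 s) (lexx eps)).
rewrite /= (negbTE sT).
have -> : eps = \sum_s' P s (sigma s) s' * eps.
  by rewrite -mulr_suml en_sum ?mul1r.
rewrite -big_split /=; apply: ler_sum => i _.
rewrite -mulrDr; apply: ler_wpM2l; first exact: P_ge0.
by rewrite -lerBlDr; apply: HN; rewrite mem_enum.
Qed.

End Aux.

Lemma ninf_min_le a b m : ninf_le (ninf_min a b) m -> ninf_le a m \/ ninf_le b m.
Proof. by rewrite /ninf_min; case: ifP => _ H; [left|right]. Qed.

Lemma big_ninf (I : finType) (Pr : pred I) (F : I -> ninf) m :
  ninf_le (\big[ninf_min/None]_(i | Pr i) F i) m -> m <> None ->
  exists i, Pr i /\ ninf_le (F i) m.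
Proof.
apply: (big_rec (fun v => ninf_le v m -> m <> None -> exists i, Pr i /\ ninf_le (F i) m)).
  by case: m.
move=> i v Pi IH /ninf_min_le [H|H] Hm; first by exists i.
exact: IH.
Qed.

Arguments big_ninf {I Pr F m}.

Theorem proposition6 (R : realType) (S Act : finType) (P : S -> Act -> S -> R)
    (T : {set S}) (x : S -> R) (r : S -> ninf) :
  is_MDP P ->
  (forall s, 0 <= x s <= 1) ->
  (forall s, ninf_le (Dmin P T x r s) (r s)) ->
  (forall s, x s <= Bmax P T x s) ->
  (forall s, s \notin T -> 0 < x s -> r s != None) ->
  forall s, x s <= Pr_max_reach P T s.
Proof.
move=> HP Hx HD HB Hr s0.
have Hex : forall s, exists a, [/\ enabled P s a,
   (s \notin T -> x s <= \sum_s' P s a s' * x s') &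
   (forall k, s \notin T -> r s = Some k ->
      exists s', 0 < P s a s' /\ exists j, r s' = Some j /\ (j < k)%N)].
  move=> s; case sT: (s \in T).
    by have [_ _ /(_ s) [a Ha]] := HP; exists a; split.
  case Ers: (r s) => [k|].
    have := HD s; rewrite /Dmin sT Ers.
    case Eb: (\big[ninf_min/None]_(a | incr_action P x s a) _) => [j|] //= Hjk.
    have [a [Ha Hin]] : exists a, incr_action P x s a /\
        ninf_le (\big[ninf_min/None]_(s' | post P s a s') r s') (Some j).
      by apply: big_ninf => //; rewrite Eb /= leqnn.
    have Hsn : Some j <> None by [].
    have [s' [Hs' Hr']] := big_ninf Hin Hsn.
    case/andP: Ha => Hen Hinc; exists a; split => // k' _ [<-].
    exists s'; split => //; case Er': (r s') Hr' => [j'|] //= Hj'.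
    by exists j'; split => //; apply: leq_ltn_trans Hj' Hjk.
  have [_ _ /(_ s) [a Ha]] := HP; exists a; split => // _.
  have : ~~ (0 < x s) by apply/negP => /(Hr s (negbT sT)); rewrite Ers.
  rewrite -leNgt => Hxs; apply: le_trans Hxs _.
  apply: sumr_ge0 => i _; apply: mulr_ge0; [exact: (P_ge0 HP) | by case/andP: (Hx i)].
have [sigma Hsig] := choice Hex.
have Hstr : is_strategy P sigma by move=> s; case: (Hsig s).
have key : forall s, x s <= Pr_reach P T sigma s.
  move=> s1; rewrite leNgt; apply/negP => Hlt1.
  pose y := Pr_reach P T sigma; pose z s := x s - y s.
  have [i _ Hi] := @arg_maxP _ R S s0 predT z isT.
  have Hmax : forall j, z j <= z i by move=> j; exact: (Hi j isT).

  have m0 : 0 < z i by apply: lt_le_trans (Hmax s1); rewrite subr_gt0.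
  have HnT : forall s, z s = z i -> s \notin T.
    move=> s Hs; apply/negP => sT.
    have : 1 <= y s by have := reach_le_Pr T HP Hstr 0 s; rewrite /= sT.
    case/andP: (Hx s) => _ Hx1; move: m0; rewrite -Hs /z; lra.
  have claim : forall k s, z s = z i -> r s <> Some k.
    elim/ltn_ind => k IH s Hs Hrs.
    have sT := HnT s Hs.
    have [Hen Hinc Hrk] := Hsig s.
    have [s' [Hp [j [Hrj Hjk]]]] := Hrk k sT Hrs.
    apply: (IH j Hjk s') => //.
    apply/eqP; rewrite eq_le Hmax /=; rewrite leNgt; apply/negP => Hlt.
    have H1 : z s <= \sum_s'' P s (sigma s) s'' * z s''.
      have := Hinc sT; have := Pr_super T HP Hstr s sT.
      rewrite /z /y /=.
      rewrite [X in _ -> _ -> _ <= X](eq_bigr (fun t => P s (sigma s) t * x t - P s (sigma s) t * Pr_reach P T sigma t)); last by move=> t _; rewrite mulrBr.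
      rewrite sumrB; lra.
    have H2 : 0 < \sum_s'' P s (sigma s) s'' * (z i - z s'').
      rewrite (bigD1 s') //=; apply: ltr_pwDl.
        by apply: mulr_gt0 => //; rewrite subr_gt0.
      by apply: sumr_ge0 => t _; apply: mulr_ge0; [exact: (P_ge0 HP)|rewrite subr_ge0].
    move: H2; under eq_bigr do rewrite mulrBr; rewrite sumrB -mulr_suml.
    rewrite (eqP Hen) mul1r; move: H1; rewrite Hs; lra.
  have iT := HnT i erefl.
  have : 0 < x i.
    by apply: lt_le_trans m0 _; rewrite /z gerBl; exact: (Pr_ge0 T HP Hstr).
  move/(Hr i iT); case Eri: (r i) => [k|] // _.
  exact: (claim k i erefl Eri).
apply: le_trans (key s0) _.
have hb : has_ubound [set Pr_reach P T sg s0 | sg in [set sg | is_strategy P sg]].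
  by exists 1 => y [sg Hsg <-]; apply: Pr_le1.
by apply: (ub_le_sup hb); exists sigma.
Qed.
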